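(* Let $X$ be a Polish space and let $T$ be either a (global) jointly continuous semigroup on $X$ or a local semigroup on $X$, and let $A$ be the Lie generator of $T$. Then $A$ has a positive eigenvalue (i.e. there exist $\lambda>0$ and $f \in D(A)$, $f\neq 0$, with $Af=\lambda f$) if and only if $T$ is a local semigroup.
   Context: $CB(X)$ denotes the Banach space (sup norm) of bounded continuous real-valued functions on $X$. A (global) jointly continuous semigroup on $X$ is a map $t\mapsto T(t)$ from $[0,\infty)$ to the set of maps $X\to X$ such that $T(0)x=x$ for all $x\in X$, $T(t)T(s)=T(t+s)$ for all $t,s\ge 0$ (composition), and $(t,x)\mapsto T(t)x$ is continuous on $[0,\infty)\times X$. A local semigroup on $X$ is given by a function $m: X\to(0,\infty]$ such that $1/m$ (with $1/\infty=0$) is continuous and $m$ is not identically $\infty$, together with maps $T(t)$ such that: $x\in D(T(t))$ if and only if $t\in[0,m(x))$; $T(0)x=x$; for $t,s\ge0$ and $x\in X$, $T(t)T(s)x=T(t+s)x$ holds if and only if $t+s<m(x)$; $(t,x)\mapsto T(t)x$ is continuous on $\{(t,x): 0\le t<m(x)\}$; and $T$ is maximal: if $\lim_{t\to s^-}T(t)x$ exists then $s<m(x)$. The Lie generator of $T$ is the linear operator $A$ on $CB(X)$ given by $A=\{(f,g)\in CB(X)^2 : g(x)=\lim_{t\to0^+}\frac1t\,(f(T(t)x)-f(x)) \text{ for every } x\in X\}$, i.e. $f\in D(A)$ and $Af=g$ exactly when this limit exists for every $x$ and defines a function $g\in CB(X)$. *)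

(* Defs.v *)
From Stdlib Require Import Reals.
Open Scope R_scope.

Definition is_metric {X : Type} (d : X -> X -> R) : Prop :=
  (forall x y, 0 <= d x y) /\
  (forall x y, d x y = 0 <-> x = y) /\
  (forall x y, d x y = d y x) /\
  (forall x y z, d x z <= d x y + d y z).

Definition metric_complete {X : Type} (d : X -> X -> R) : Prop :=
  forall u : nat -> X,
    (forall eps, 0 < eps -> exists N, forall n p, (N <= n)%nat -> (N <= p)%nat ->
        d (u n) (u p) < eps) ->
    exists l, forall eps, 0 < eps -> exists N, forall n, (N <= n)%nat -> d (u n) l < eps.

Definition metric_separable {X : Type} (d : X -> X -> R) : Prop :=
  exists u : nat -> X, forall x eps, 0 < eps -> exists n, d x (u n) < eps.

Definition polish {X : Type} (d : X -> X -> R) : Prop :=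
  is_metric d /\ metric_complete d /\ metric_separable d.

Definition cont_X {X : Type} (d : X -> X -> R) (f : X -> R) : Prop :=
  forall x eps, 0 < eps -> exists delta, 0 < delta /\
    forall y, d x y < delta -> Rabs (f y - f x) < eps.

Definition CB {X : Type} (d : X -> X -> R) (f : X -> R) : Prop :=
  cont_X d f /\ exists M, forall x, Rabs (f x) <= M.

(** * Semigroups.  A (possibly local) semigroup is a partial map
    T : R -> X -> option X, where T t x = Some y means x ∈ D(T(t)) and T(t)x = y.
    Only t >= 0 is meaningful. *)

(** Domain {(t,x) : 0 <= t < m(x)}; m x = None encodes m(x) = +infinity. *)
Definition in_dom {X : Type} (m : X -> option R) (t : R) (x : X) : Prop :=
  0 <= t /\ match m x with None => True | Some r => t < r end.

(** 1/m with 1/infinity = 0 *)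
Definition inv_m {X : Type} (m : X -> option R) (x : X) : R :=
  match m x with None => 0 | Some r => / r end.

Definition is_global_semigroup {X : Type} (d : X -> X -> R)
    (T : R -> X -> option X) : Prop :=
  exists G : R -> X -> X,
    (forall t x, 0 <= t -> T t x = Some (G t x)) /\
    (forall x, G 0 x = x) /\
    (forall t s x, 0 <= t -> 0 <= s -> G t (G s x) = G (t + s) x) /\
    (forall t x, 0 <= t -> forall eps, 0 < eps -> exists delta, 0 < delta /\
       forall t' x', 0 <= t' -> Rabs (t' - t) < delta -> d x x' < delta ->
         d (G t x) (G t' x') < eps).

Definition is_local_semigroup {X : Type} (d : X -> X -> R)
    (T : R -> X -> option X) : Prop :=
  exists m : X -> option R,
    (forall x r, m x = Some r -> 0 < r) /\
    cont_X d (inv_m m) /\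
    (exists x, m x <> None) /\
    (forall t x, 0 <= t -> (T t x <> None <-> in_dom m t x)) /\
    (forall x, T 0 x = Some x) /\
    (* T(t)T(s)x = T(t+s)x (both sides defined and equal) iff t+s < m(x) *)
    (forall t s x, 0 <= t -> 0 <= s ->
       ((match T s x with None => None | Some y => T t y end) = T (t + s) x
         /\ T (t + s) x <> None) <-> in_dom m (t + s) x) /\
    (forall t x, in_dom m t x -> forall eps, 0 < eps -> exists delta, 0 < delta /\
       forall t' x' y y', in_dom m t' x' -> Rabs (t' - t) < delta -> d x x' < delta ->
         T t x = Some y -> T t' x' = Some y' -> d y y' < eps) /\
    (* maximality: if lim_{t -> s^-} T(t)x exists then s < m(x) *)
    (forall x s, 0 < s -> (forall t, 0 <= t < s -> T t x <> None) ->
       (exists z, forall eps, 0 < eps -> exists delta, 0 < delta /\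
          forall t y, 0 <= t -> s - delta < t < s -> T t x = Some y -> d y z < eps) ->
       in_dom m s x).

Definition lie_gen {X : Type} (d : X -> X -> R) (T : R -> X -> option X)
    (f g : X -> R) : Prop :=
  CB d f /\ CB d g /\
  forall x eps, 0 < eps -> exists delta, 0 < delta /\
    forall t y, 0 < t < delta -> T t x = Some y ->
      Rabs ((f y - f x) / t - g x) < eps.

Definition has_pos_eigenvalue {X : Type} (d : X -> X -> R)
    (T : R -> X -> option X) : Prop :=
  exists lam f, 0 < lam /\ lie_gen d T f (fun x => lam * f x) /\ exists x, f x <> 0.

(* Main.v *)
Require Import Defs.
From Stdlib Require Import Reals.
From Stdlib Require Import Lra Classical FunctionalExtensionality.
Open Scope R_scope.

Lemma real_ind (P : R -> Prop) :
  P 0 ->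
  (forall t, 0 < t -> (forall s, 0 <= s < t -> P s) -> P t) ->
  (forall t, 0 <= t -> (forall s, 0 <= s <= t -> P s) ->
     exists del, 0 < del /\ forall s, t < s < t + del -> P s) ->
  forall t, 0 <= t -> P t.
Proof.
  intros H0 Hcl Hext b Hb.
  destruct (classic (P b)) as [|Hnb]; [assumption|exfalso].
  set (E := fun t => 0 <= t <= b /\ forall s, 0 <= s <= t -> P s).
  assert (HEb : bound E) by (exists b; intros t [[_ ?] _]; lra).
  assert (HE0 : E 0).
  { split; [lra|]. intros s Hs. replace s with 0 by lra. exact H0. }
  destruct (completeness E HEb (ex_intro _ 0 HE0)) as [sg [Hub Hlub]].
  assert (Hsg0 : 0 <= sg) by (apply Hub; exact HE0).
  assert (Hsgb : sg <= b) by (apply Hlub; intros t [[_ ?] _]; lra).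
  assert (Hbelow : forall s, 0 <= s < sg -> P s).
  { intros s Hs. destruct (classic (P s)) as [|Hns]; [assumption|exfalso].
    assert (Hs_ub : is_upper_bound E s).
    { intros t [Ht Hall]. destruct (Rle_dec t s) as [|Hts]; [assumption|].
      exfalso. apply Hns. apply Hall. lra. }
    specialize (Hlub s Hs_ub). lra. }
  assert (Hsg : P sg).
  { destruct (Req_dec sg 0) as [->|Hne]; [exact H0|]. apply Hcl; [lra|exact Hbelow]. }
  assert (Hupto : forall s, 0 <= s <= sg -> P s).
  { intros s Hs. destruct (Req_dec s sg) as [->|]; [exact Hsg| apply Hbelow; lra]. }
  destruct (Req_dec sg b) as [Heq|Hne].
  { apply Hnb. rewrite <- Heq. exact Hsg. }
  destruct (Hext sg Hsg0 Hupto) as [del [Hdel Hd]].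
  assert (Hmin1 : Rmin del (b - sg) <= del) by apply Rmin_l.
  assert (Hmin2 : Rmin del (b - sg) <= b - sg) by apply Rmin_r.
  assert (Hmin0 : 0 < Rmin del (b - sg)) by (apply Rmin_pos; lra).
  set (t1 := sg + Rmin del (b - sg) / 2).
  assert (HE1 : E t1).
  { split; [unfold t1; lra|]. intros s Hs.
    destruct (Rle_dec s sg); [apply Hupto; lra| apply Hd; unfold t1 in Hs; lra]. }
  assert (t1 <= sg) by (apply Hub; assumption). unfold t1 in *; lra.
Qed.

Lemma abs_frac (c D : R) : 0 <= c -> 0 < D -> c * (D / (2 * (c + 1))) <= D / 2.
Proof.
  intros Hc HD.
  assert (Heq : c * (D / (2 * (c + 1))) = D/2 - D/(2*(c+1))) by (field; lra).
  assert (0 < D/(2*(c+1))) by (apply Rdiv_lt_0_compat; lra).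
  lra.
Qed.

Lemma global_no_eig X (d : X -> X -> R) T :
  is_metric d -> is_global_semigroup d T -> ~ has_pos_eigenvalue d T.
Proof.
  intros Hm [G [HTG [HG0 [HGs HGc]]]]
    [lam [f [Hlam [[[Hfc [M HM]] [_ Hlim]] [x0 Hx0]]]]].
  assert (Hdd : forall x, d x x = 0) by (intro x; apply (proj1 (proj2 Hm)); reflexivity).
  set (c := f x0) in *.
  set (k := fun t => c * f (G t x0)).
  assert (Hc2 : 0 < c * c) by (pose proof (Rsqr_pos_lt c Hx0); unfold Rsqr in *; lra).
  assert (Hlc : 0 < lam * (c*c)) by (apply Rmult_lt_0_compat; lra).
  set (a := lam * (c*c) / 2).
  assert (Ha : 0 < a) by (unfold a; lra).
  assert (Hcpos : 0 <= Rabs c) by apply Rabs_pos.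
  assert (Hhc : forall t, 0 <= t -> forall eps, 0 < eps -> exists del, 0 < del /\
     forall s, 0 <= s -> Rabs (s - t) < del -> Rabs (f (G s x0) - f (G t x0)) < eps).
  { intros t Ht eps Heps. destruct (Hfc (G t x0) eps Heps) as [d1 [Hd1 Hf1]].
    destruct (HGc t x0 Ht d1 Hd1) as [d2 [Hd2 HG2]].
    exists d2; split; [lra|]. intros s Hs Hst. apply Hf1. apply HG2; [lra|exact Hst|].
    rewrite Hdd; lra. }
  assert (Hbd : forall t, k t <= Rabs c * M).
  { intro t. unfold k. apply Rle_trans with (Rabs (c * f (G t x0))); [apply Rle_abs|].
    rewrite Rabs_mult. apply Rmult_le_compat_l; [apply Rabs_pos| apply HM]. }
  assert (HP : forall t, 0 <= t -> c*c + a*t <= k t).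
  { apply real_ind.
    - unfold k. rewrite HG0. fold c. lra.
    - intros t Ht Hbel.
      destruct (Rle_lt_dec (c*c + a*t) (k t)) as [|Hlt]; [assumption|exfalso].
      set (D := c*c + a*t - k t).
      assert (HD : 0 < D) by (unfold D; lra).
      assert (HD1 : 0 < D / (2*(Rabs c + 1))) by (apply Rdiv_lt_0_compat; lra).
      destruct (Hhc t (Rlt_le _ _ Ht) _ HD1) as [del [Hdel Hh]].
      assert (HD2 : 0 < D / (2*(a+1))) by (apply Rdiv_lt_0_compat; lra).
      set (w := Rmin del (Rmin t (D / (2*(a+1))))).
      assert (Hw1 : w <= del) by apply Rmin_l.
      assert (Hw2 : w <= t) by (unfold w; eapply Rle_trans; [apply Rmin_r|apply Rmin_l]).
      assert (Hw3 : w <= D / (2*(a+1))) by (unfold w; eapply Rle_trans; [apply Rmin_r|apply Rmin_r]).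
      assert (Hw0 : 0 < w) by (unfold w; repeat apply Rmin_pos; lra).
      set (s := t - w/2).
      assert (Hs : 0 <= s < t) by (unfold s; lra).
      specialize (Hbel s Hs).
      assert (Hst : Rabs (s - t) < del) by (unfold s; apply Rabs_def1; lra).
      specialize (Hh s (proj1 Hs) Hst).
      assert (Hks : Rabs (k s - k t) <= D/2).
      { unfold k. replace (c * f (G s x0) - c * f (G t x0)) with (c * (f (G s x0) - f (G t x0))) by ring.
        rewrite Rabs_mult. eapply Rle_trans; [|apply (abs_frac (Rabs c) D); lra].
        apply Rmult_le_compat_l; lra. }
      assert (Haw : a * w <= D/2).
      { eapply Rle_trans; [apply Rmult_le_compat_l; [lra|exact Hw3]|].
        apply abs_frac; lra. }
      assert (Has : a * s = a * t - a * w / 2) by (unfold s; field).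
      pose proof (Rle_abs (k s - k t)).
      unfold D in *. lra.
    - intros t Ht Hupto.
      pose proof (Hupto t (conj Ht (Rle_refl t))) as Pt.
      assert (Hat : 0 <= a * t) by (apply Rmult_le_pos; lra).
      assert (Hkt : c * c <= k t) by lra.
      assert (HL : 0 < lam * k t) by (apply Rmult_lt_0_compat; lra).
      set (eps := lam * k t / (2*(Rabs c+1))).
      assert (Heps : 0 < eps) by (unfold eps; apply Rdiv_lt_0_compat; lra).
      set (y := G t x0).
      destruct (Hlim y eps Heps) as [del [Hdel Hl]].
      exists del. split; [exact Hdel|]. intros s' Hs'.
      set (s := s' - t).
      assert (Hs : 0 < s < del) by (unfold s; lra).
      specialize (Hl s (G s y) Hs (HTG s y (Rlt_le _ _ (proj1 Hs)))). cbv beta in Hl.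
      assert (HGy : G s y = G s' x0) by (unfold y; rewrite HGs by lra; f_equal; unfold s; ring).
      rewrite HGy in Hl.
      set (u := (f (G s' x0) - f y) / s) in *.
      assert (Hcu : Rabs (c*u - lam * (c * f y)) <= lam * k t / 2).
      { replace (c*u - lam * (c * f y)) with (c * (u - lam * f y)) by ring.
        rewrite Rabs_mult. eapply Rle_trans; [|apply (abs_frac (Rabs c)); lra].
        apply Rmult_le_compat_l; [lra|]. unfold eps in Hl. lra. }
      assert (Hky : c * f y = k t) by reflexivity.
      rewrite Hky in Hcu.
      pose proof (Rle_abs (lam * k t - c * u)). rewrite Rabs_minus_sym in H.
      assert (Hlk : lam * (c*c) <= lam * k t) by (apply Rmult_le_compat_l; lra).
      assert (Hcua : a <= c * u) by (unfold a; lra).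
      assert (Hsu : s * a <= s * (c * u)) by (apply Rmult_le_compat_l; lra).
      assert (Hks' : k s' = k t + s * (c * u)).
      { unfold k, u. fold y. field. lra. }
      assert (Has : a * s' = a * t + s * a) by (unfold s; ring).
      lra. }
  assert (HM0 : 0 <= M) by (pose proof (HM x0); pose proof (Rabs_pos (f x0)); lra).
  assert (Ht0 : 0 <= Rabs c * M / a) by
    (apply Rmult_le_pos; [apply Rmult_le_pos; lra| left; apply Rinv_0_lt_compat; lra]).
  pose proof (HP (Rabs c * M / a + 1) ltac:(lra)).
  pose proof (Hbd (Rabs c * M / a + 1)).
  assert (a * (Rabs c * M / a + 1) = Rabs c * M + a) by (field; lra).
  lra.
Qed.

Definition gfun {X : Type} (m : X -> option R) (x : X) : R :=
  match m x with None => 0 | Some r => exp (- r) end.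

Definition phi (u : R) : R := if Rle_dec u 0 then 0 else exp (- / u).

Lemma exp_small (v : R) : 0 < v -> exp (- / v) <= v.
Proof.
  intro Hv.
  assert (Hiv : 0 < / v) by (apply Rinv_0_lt_compat; lra).
  pose proof (exp_ineq1 (/ v) ltac:(lra)).
  rewrite exp_Ropp.
  rewrite <- (Rinv_inv v) at 2.
  left. apply Rinv_lt_contravar; [apply Rmult_lt_0_compat; [exact Hiv| apply exp_pos]| lra].
Qed.

Lemma phi_cont (u : R) : 0 <= u -> forall eps, 0 < eps -> exists del, 0 < del /\
  forall v, 0 <= v -> Rabs (v - u) < del -> Rabs (phi v - phi u) < eps.
Proof.
  intros Hu eps Heps.
  destruct (Req_dec u 0) as [->|Hne].
  - exists eps. split; [exact Heps|]. intros v Hv Hvd.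
    unfold phi. destruct (Rle_dec 0 0) as [_|]; [|lra].
    destruct (Rle_dec v 0).
    + rewrite Rminus_0_r, Rabs_R0. exact Heps.
    + rewrite Rminus_0_r. rewrite Rabs_right by (left; apply exp_pos).
      rewrite Rminus_0_r in Hvd. rewrite Rabs_right in Hvd by lra.
      pose proof (exp_small v ltac:(lra)). lra.
  - assert (Hc : continuity_pt (fun v => exp (- / v)) u) by (reg; lra).
    destruct (Hc eps Heps) as [alp [Halp Hal]].
    exists (Rmin alp (u/2)). split; [apply Rmin_pos; lra|].
    intros v Hv Hvd.
    assert (Hm1 : Rmin alp (u/2) <= alp) by apply Rmin_l.
    assert (Hm2 : Rmin alp (u/2) <= u/2) by apply Rmin_r.
    assert (Hvp : 0 < v).
    { destruct (Rle_dec v (u/2)); [|lra]. rewrite Rabs_left1 in Hvd; lra. }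
    unfold phi. destruct (Rle_dec v 0); [lra|]. destruct (Rle_dec u 0); [lra|].
    destruct (Req_dec v u) as [->|Hvu]; [rewrite Rminus_diag, Rabs_R0; exact Heps|].
    apply (Hal v). split; [split; [exact I| intro; apply Hvu; symmetry; assumption]|].
    simpl. unfold R_dist. lra.
Qed.

Lemma gfun_phi {X : Type} (m : X -> option R) (Hpos : forall x r, m x = Some r -> 0 < r) x :
  gfun m x = phi (inv_m m x).
Proof.
  unfold gfun, inv_m, phi. destruct (m x) eqn:E.
  - pose proof (Hpos x r E). assert (0 < / r) by (apply Rinv_0_lt_compat; lra).
    destruct (Rle_dec (/ r) 0); [lra|]. rewrite Rinv_inv. reflexivity.
  - destruct (Rle_dec 0 0); [reflexivity|lra].
Qed.

Lemma inv_m_nonneg {X : Type} (m : X -> option R) (Hpos : forall x r, m x = Some r -> 0 < r) x :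
  0 <= inv_m m x.
Proof.
  unfold inv_m. destruct (m x) eqn:E; [|lra].
  left; apply Rinv_0_lt_compat; exact (Hpos x r E).
Qed.

Lemma local_eig X (d : X -> X -> R) T :
  is_metric d -> is_local_semigroup d T -> has_pos_eigenvalue d T.
Proof.
  intros Hm [m [Hpos [Hinvc [[x1 Hx1] [Hdom [HT0 [Hsg [Hcont Hmax]]]]]]]].
  assert (Hdd : forall x, d x x = 0) by (intro x; apply (proj1 (proj2 Hm)); reflexivity).
  assert (Hsym : forall x y, d x y = d y x) by apply Hm.
  assert (Hshift : forall t x y, 0 <= t -> T t x = Some y ->
            (m x = None /\ m y = None) \/ (exists r, m x = Some r /\ m y = Some (r - t))).
  { intros t x y Ht Hxy.
    assert (FA : forall s, 0 <= s -> in_dom m (s+t) x -> T s y = T (s+t) x /\ T (s+t) x <> None).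
    { intros s Hs Hin. pose proof (proj2 (Hsg s t x Hs Ht) Hin) as H.
      rewrite Hxy in H. exact H. }
    assert (FB : forall s, 0 <= s -> in_dom m (s+t) x -> in_dom m s y).
    { intros s Hs Hin. apply (proj1 (Hdom s y Hs)). destruct (FA s Hs Hin) as [-> ?]; assumption. }
    assert (Htx : in_dom m t x) by (apply (proj1 (Hdom t x Ht)); rewrite Hxy; discriminate).
    destruct (m x) as [r|] eqn:Hmx.
    - right. exists r. split; [reflexivity|].
      assert (Htr : t < r) by (unfold in_dom in Htx; rewrite Hmx in Htx; tauto).
      assert (HB2 : forall s, 0 <= s < r - t -> in_dom m s y).
      { intros s Hs. apply FB; [lra|]. unfold in_dom. rewrite Hmx. lra. }
      assert (Hno : in_dom m (r - t) y -> False).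
      { intro Hsig. set (sg := r - t) in *.
        assert (Hsg0 : 0 <= sg) by (unfold sg; lra).
        destruct (T sg y) as [z|] eqn:Hz.
        2:{ apply (proj2 (Hdom sg y Hsg0) Hsig). exact Hz. }
        assert (Hr0 : 0 < r) by exact (Hpos x r Hmx).
        assert (Hin : in_dom m r x).
        { apply Hmax; [exact Hr0| |].
          - intros u Hu. apply (proj2 (Hdom u x (proj1 Hu))). unfold in_dom. rewrite Hmx. lra.
          - exists z. intros eps Heps.
            destruct (Hcont sg y Hsig eps Heps) as [del [Hdel Hc]].
            exists (Rmin del sg).
            assert (Hm1 : Rmin del sg <= del) by apply Rmin_l.
            assert (Hm2 : Rmin del sg <= sg) by apply Rmin_r.
            split; [apply Rmin_pos; unfold sg; lra|].
            intros u w Hu Hur Huw.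
            set (t' := u - t).
            assert (Ht' : 0 <= t') by (unfold t', sg in *; lra).
            assert (Hin' : in_dom m (t' + t) x).
            { unfold in_dom. rewrite Hmx. unfold t'. lra. }
            destruct (FA t' Ht' Hin') as [Heq _].
            replace (t' + t) with u in Heq by (unfold t'; ring).
            rewrite Huw in Heq.
            rewrite Hsym. apply (Hc t' y); [exact (FB t' Ht' Hin')| | rewrite Hdd; lra | exact Hz | exact Heq].
            apply Rabs_def1; unfold t', sg in *; lra. }
        unfold in_dom in Hin. rewrite Hmx in Hin. lra. }
      destruct (m y) as [r'|] eqn:Hmy.
      + destruct (Rtotal_order r' (r - t)) as [Hl|[He|Hg]].
        * exfalso. pose proof (Hpos y r' Hmy).
          pose proof (HB2 r' ltac:(lra)) as Hq. unfold in_dom in Hq. rewrite Hmy in Hq. lra.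
        * rewrite He. reflexivity.
        * exfalso. apply Hno. unfold in_dom. rewrite Hmy. lra.
      + exfalso. apply Hno. unfold in_dom. rewrite Hmy. split; [lra|exact I].
    - left. split; [reflexivity|].
      destruct (m y) as [r|] eqn:Hmy; [|reflexivity]. exfalso.
      pose proof (Hpos y r Hmy).
      assert (Hin : in_dom m (r + t) x) by (unfold in_dom; rewrite Hmx; split; [lra|exact I]).
      pose proof (FB r ltac:(lra) Hin) as Hq. unfold in_dom in Hq. rewrite Hmy in Hq. lra. }
  set (g := gfun m).
  assert (Hgs : forall t x y, 0 <= t -> T t x = Some y -> g y = exp t * g x).
  { intros t x y Ht Hxy. unfold g, gfun.
    destruct (Hshift t x y Ht Hxy) as [[-> ->]|[r [-> ->]]]; [ring|].
    rewrite <- exp_plus. f_equal. ring. }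
  assert (Hgb : forall x, Rabs (g x) <= 1).
  { intro x. unfold g, gfun. destruct (m x) eqn:E.
    - pose proof (Hpos x r E). rewrite Rabs_right by (left; apply exp_pos).
      rewrite <- exp_0. left. apply exp_increasing. lra.
    - rewrite Rabs_R0. lra. }
  assert (Hgc : cont_X d g).
  { intros x eps Heps.
    destruct (phi_cont (inv_m m x) (inv_m_nonneg m Hpos x) eps Heps) as [d1 [Hd1 Hp]].
    destruct (Hinvc x d1 Hd1) as [d2 [Hd2 Hi]].
    exists d2. split; [exact Hd2|]. intros y Hy. unfold g. rewrite !(gfun_phi m Hpos).
    apply Hp; [apply inv_m_nonneg; exact Hpos| apply Hi; exact Hy]. }
  exists 1, g. split; [lra|]. split.
  - replace (fun x => 1 * g x) with g by (apply functional_extensionality; intro; ring).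
    split; [split; [exact Hgc| exists 1; exact Hgb]|].
    split; [split; [exact Hgc| exists 1; exact Hgb]|].
    intros x eps Heps.
    destruct (derivable_pt_lim_exp 0 eps Heps) as [del Hdel].
    exists del. split; [apply cond_pos|].
    intros t y [Ht0 Htd] Hty. rewrite (Hgs t x y (Rlt_le _ _ Ht0) Hty).
    specialize (Hdel t ltac:(lra) ltac:(rewrite Rabs_right; lra)).
    rewrite Rplus_0_l, exp_0 in Hdel.
    replace ((exp t * g x - g x) / t - g x) with (g x * ((exp t - 1) / t - 1)) by (field; lra).
    rewrite Rabs_mult. pose proof (Hgb x).
    pose proof (Rabs_pos ((exp t - 1) / t - 1)).
    apply Rle_lt_trans with (1 * Rabs ((exp t - 1) / t - 1)); [|lra].
    apply Rmult_le_compat_r; assumption.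
  - exists x1. unfold g, gfun. destruct (m x1); [|congruence].
    pose proof (exp_pos (- r)). lra.
Qed.

Theorem theorem3 (X : Type) (d : X -> X -> R) (T : R -> X -> option X)
  (HX : polish d)
  (HT : is_global_semigroup d T \/ is_local_semigroup d T) :
  has_pos_eigenvalue d T <-> is_local_semigroup d T.
Proof.
  destruct HX as [Hm _]. split.
  - intro He. destruct HT as [Hg|Hl]; [exfalso; exact (global_no_eig X d T Hm Hg He)| exact Hl].
  - intro Hl. exact (local_eig X d T Hm Hl).
Qed.
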